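(* Let $N\ge1$, $m\ge2$, let $A\in\mathbb{R}^{m\times m}$ be the integrator matrix, $C\in\mathbb{R}^{1\times m}$, $K_5\in\mathbb{R}^{1\times m}$, and $K_6\in\mathbb{R}^{m\times1}$ such that every eigenvalue of $A+K_6C$ has modulus strictly less than $1$. Fix $e_0\in\mathbb{R}^{Nm}$ and set $\omega_d[k]=(I_N\otimes(K_5K_6C(A+K_6C)^k))e_0\in\mathbb{R}^N$. Consider $$\bar Z[k+1]=(I_N-S[k])\bar Z[k]+\omega_d[k],\qquad k=0,1,2,\dots,$$ with $\bar Z[k]=(\bar z_1[k],\dots,\bar z_N[k])^T\in\mathbb{R}^N$ and $S[k]$ defined from the switching graph $\mathcal{G}_{\sigma[k]}$ as in the context. If $\mathcal{G}_{\sigma[k]}$ is uniformly jointly quasi-strongly connected in the discrete-time sense, then for every $\bar Z[0]\in\mathbb{R}^N$ there exists $\bar z^*\in\mathbb{R}$ such that $\lim_{k\to\infty}\bar z_i[k]=\bar z^*$ for all $i=1,\dots,N$.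
   Context: $A$ has ones on the superdiagonal and zeros elsewhere; $\otimes$ is the Kronecker product. Graphs: nodes $v_1,\dots,v_N$; edge $e_{ij}$ from $v_j$ to $v_i$; no self-edges; a finite index set $\mathcal{S}$ of digraphs, graph $\mathcal{G}_q$ having fixed weights $\alpha^{ij}_q>0$ on its edges ($0$ otherwise), $\mathcal{N}_i(q)=\{j:e_{ij}\in\mathcal{G}_q\}$; $\sigma:\{0,1,2,\dots\}\to\mathcal{S}$ arbitrary. $S[k]\in\mathbb{R}^{N\times N}$: with $d_i[k]=\sum_{j\in\mathcal{N}_i(\sigma[k])}\alpha^{ij}_{\sigma[k]}$, the $(i,i)$ entry is $d_i[k]/(1+d_i[k])$ and the $(i,j)$ entry ($i\ne j$) is $-\alpha^{ij}_{\sigma[k]}/(1+d_i[k])$. A digraph is quasi-strongly connected if some node has a directed path to every other node. $\mathcal{G}_{\sigma[k]}$ is uniformly jointly quasi-strongly connected in the discrete-time sense if there is an integer $M>0$ such that for every $k\ge0$ the graph with edge set $\bigcup_{i=k}^{k+M}\mathcal{E}(\mathcal{G}_{\sigma[i]})$ is quasi-strongly connected. *)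

(* Defs.v *)
From Stdlib Require Import Reals Lra Lia Arith List Relations.
Open Scope R_scope.

(* Matrices are functions nat -> nat -> R, vectors nat -> R; dimensions
   are passed explicitly; all indices are 0-based. *)

Fixpoint sumR (n : nat) (f : nat -> R) : R :=
  match n with
  | O => 0
  | S n' => sumR n' f + f n'
  end.

Definition matmul (n : nat) (A B : nat -> nat -> R) : nat -> nat -> R :=
  fun i j => sumR n (fun l => A i l * B l j).

Definition idmat : nat -> nat -> R :=
  fun i j => if Nat.eqb i j then 1 else 0.

Fixpoint matpow (m : nat) (M : nat -> nat -> R) (k : nat) : nat -> nat -> R :=
  match k with
  | O => idmat
  | S k' => matmul m (matpow m M k') M
  end.

Definition mulmv (n : nat) (A : nat -> nat -> R) (v : nat -> R) : nat -> R :=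
  fun i => sumR n (fun j => A i j * v j).

Definition kron (p q : nat) (A B : nat -> nat -> R) : nat -> nat -> R :=
  fun i j => A (i / p)%nat (j / q)%nat * B (i mod p)%nat (j mod q)%nat.

Definition integrator : nat -> nat -> R :=
  fun i j => if Nat.eqb j (S i) then 1 else 0.

(* (a + i b) is a (complex) eigenvalue of the real m x m matrix M:
   there is a nonzero complex vector x + i y with M (x + i y) = (a + i b)(x + i y) *)
Definition is_complex_eigenvalue (m : nat) (M : nat -> nat -> R) (a b : R) : Prop :=
  exists x y : nat -> R,
    (exists j, (j < m)%nat /\ (x j <> 0 \/ y j <> 0)) /\
    (forall i, (i < m)%nat ->
       mulmv m M x i = a * x i - b * y i /\
       mulmv m M y i = b * x i + a * y i).

Definition schur_stable (m : nat) (M : nat -> nat -> R) : Prop :=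
  forall a b, is_complex_eigenvalue m M a b -> a * a + b * b < 1.

(* Switching graphs: graph G_q has weight alpha q i j on edge e_ij (from v_j
   to v_i); alpha q i j > 0 iff the edge is present, 0 otherwise. *)

Definition deg (N : nat) {Q : Type} (alpha : Q -> nat -> nat -> R)
  (sigma : nat -> Q) (k i : nat) : R :=
  sumR N (fun j => alpha (sigma k) i j).

Definition Smat (N : nat) {Q : Type} (alpha : Q -> nat -> nat -> R)
  (sigma : nat -> Q) (k : nat) : nat -> nat -> R :=
  fun i j =>
    if Nat.eqb i j then deg N alpha sigma k i / (1 + deg N alpha sigma k i)
    else - alpha (sigma k) i j / (1 + deg N alpha sigma k i).

Definition quasi_strongly_connected (N : nat) (E : nat -> nat -> Prop) : Prop :=
  exists r, (r < N)%nat /\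
    forall v, (v < N)%nat ->
      clos_refl_trans nat (fun a b => (a < N)%nat /\ (b < N)%nat /\ E a b) r v.

(* union graph of G_sigma[t], t = k..k+M: edge j -> i iff e_ij in some G_sigma[t] *)
Definition union_edges {Q : Type} (alpha : Q -> nat -> nat -> R)
  (sigma : nat -> Q) (k M : nat) : nat -> nat -> Prop :=
  fun j i => exists t, (k <= t <= k + M)%nat /\ alpha (sigma t) i j > 0.

Definition UJQSC (N : nat) {Q : Type} (alpha : Q -> nat -> nat -> R)
  (sigma : nat -> Q) : Prop :=
  exists M : nat, (M > 0)%nat /\
    forall k, quasi_strongly_connected N (union_edges alpha sigma k M).

(* Main.v *)
Require Import Defs.
From Stdlib Require Import Reals Lra Lia Arith List Relations Classical ClassicalEpsilon.

Module MC.
From HB Require Import structures.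
From mathcomp Require Import all_boot all_order all_algebra.
From mathcomp Require Import complex mxpoly closed_field.
From mathcomp Require Import Rstruct.
From mathcomp Require Import ring lra.
Set Implicit Arguments. Unset Strict Implicit. Unset Printing Implicit Defensive.
Import Order.TTheory GRing.Theory Num.Theory.
Local Open Scope ring_scope.

Section Rec.
Variable F : rcfType.
Local Notation C := F[i].
Import Normc.

Definition pactn (n : nat) (p : {poly C}) (y : nat -> C) (k : nat) : C :=
  \sum_(i < n) p`_i * y (k + i)%N.

Lemma pactn_mulX n (q : {poly C}) c y k : (size q <= n)%N ->
  pactn n.+1 (('X - c%:P) * q) y k = pactn n q (fun k => y k.+1 - c * y k) k.
Proof.
move=> hq; rewrite /pactn.
have e : forall i, (('X - c%:P) * q)`_i = (if i == 0%N then 0 else q`_i.-1) - c * q`_i.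
  by move=> i; rewrite mulrBl coefB coefXM coefCM.
rewrite (eq_bigr (fun i : 'I_n.+1 => (if (i:nat) == 0%N then 0 else q`_(i.-1)) * y (k + i)%N
      - c * q`_i * y (k+i)%N)); last by move=> i _; rewrite e mulrBl -mulrA.
rewrite sumrB big_ord_recl big_ord_recr /= mul0r add0r.
rewrite (nth_default 0 hq) mulr0 mul0r addr0.
rewrite -sumrB; apply: eq_bigr => i _.
rewrite /bump /= add0n add1n addnS mulrBr; congr (_ - _).
by rewrite mulrCA mulrA.
Qed.

Lemma sum_rec (a b : nat -> F) (rho B : F) :
  (forall k, 0 <= a k) -> 0 <= rho -> rho < 1 ->
  (forall k, a k.+1 <= rho * a k + b k) ->
  (forall n, \sum_(k < n) b k <= B) ->
  forall n, \sum_(k < n) a k <= (a 0%N + B) / (1 - rho).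
Proof.
move=> a0 r0 r1 hrec hB n.
have hS : forall n, \sum_(k < n) a k <= a 0%N + rho * \sum_(k < n) a k + B.
  case=> [|n']; first by rewrite big_ord0 mulr0 addr0; have := hB 0%N; have := a0 0%N; rewrite big_ord0 => h h'; lra.
  rewrite big_ord_recl.
  have h1 : \sum_(i < n') a (bump 0 i) <= rho * \sum_(i < n') a i + \sum_(i < n') b i.
    rewrite mulr_sumr -big_split /=; apply: ler_sum => i _; exact: hrec.
  have h2 : \sum_(i < n') a i <= \sum_(i < n'.+1) a i.
    by rewrite big_ord_recr /= lerDl.
  have := hB n'; have : 0 <= \sum_(i < n') a i by apply: sumr_ge0.
  move=> hs hb.
  have ha0 := a0 0%N.
  have h3 : rho * \sum_(i < n') a i <= rho * \sum_(i < n'.+1) a i by apply: ler_wpM2l.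
  rewrite big_ord_recl in h3 h2.
  lra.
have h := hS n.
rewrite ler_pdivlMr; last by lra.
lra.
Qed.


Lemma normc_ge0 (z : C) : 0 <= normc z.
Proof. by case: z => a b; rewrite /normc sqrtr_ge0. Qed.

Lemma rec_bound (rs : seq C) : (forall z, z \in rs -> normc z < 1) ->
  forall y : nat -> C,
  (forall k, pactn (size rs).+1 (\prod_(z <- rs) ('X - z%:P)) y k = 0) ->
  exists B : F, forall n, \sum_(k < n) normc (y k) <= B.
Proof.
elim: rs => [|l rs IH] hrs y hy.
  exists 0 => n; rewrite big1 // => k _.
  have := hy k; rewrite /pactn big_ord_recl big_ord0 big_nil addr0 coefC /= mul1r addn0 => ->.
  exact: normc0.
have [B hB] : exists B : F, forall n, \sum_(k < n) normc (y k.+1 - l * y k) <= B.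
  apply: (IH _ (fun k => y k.+1 - l * y k)) => [z hz|k]; first by apply: hrs; rewrite inE hz orbT.
  rewrite -pactn_mulX; last by rewrite size_prod_XsubC.
  by have := hy k; rewrite big_cons.
have hl : normc l < 1 by apply: hrs; rewrite inE eqxx.
exists ((normc (y 0%N) + B) / (1 - normc l)) => n.
apply: (@sum_rec (fun k => normc (y k)) (fun k => normc (y k.+1 - l * y k))) => //.
- by move=> k; apply: normc_ge0.
- exact: normc_ge0.
- move=> k.
  have -> : y k.+1 = (y k.+1 - l * y k) + l * y k by rewrite subrK.
  rewrite addrK.
  apply: le_trans (le_normcD _ _) _.
  by rewrite normcM addrC.
Qed.

End Rec.

Section MxPart.
Variable F : rcfType.
Local Notation C := F[i].
Import Normc.

Lemma char_poly_tr (n : nat) (A : 'M[C]_n) : char_poly A^T = char_poly A.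
Proof.
rewrite /char_poly -det_tr; congr (\det _).
by rewrite /char_poly_mx linearB /= tr_scalar_mx map_trmx trmxK.
Qed.

Lemma horner_mx_sum (n' : nat) (A : 'M[C]_n'.+1) (p : {poly C}) :
  horner_mx A p = \sum_(i < size p) p`_i *: A ^+ i.
Proof.
rewrite -{1}[p]coefK poly_def linear_sum; apply: eq_bigr => i _.
by rewrite linearZ /= rmorphXn /= horner_mx_X.
Qed.

Lemma mx_pow_bound (n' : nat) (Mc : 'M[C]_n'.+1) :
  (forall z (v : 'cV_n'.+1), v != 0 -> Mc *m v = z *: v -> normc z < 1) ->
  forall a b, exists B : F, forall n, \sum_(k < n) normc ((Mc ^+ k) a b) <= B.
Proof.
move=> hst a b.
have [rs hrs] := closed_field_poly_normal (char_poly Mc).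
rewrite (monicP (char_poly_monic Mc)) scale1r in hrs.
apply: (@rec_bound F rs _ (fun k => (Mc ^+ k) a b)) => [z hz|k].
  have : root (char_poly Mc^T) z by rewrite char_poly_tr hrs root_prod_XsubC.
  rewrite -eigenvalue_root_char => /eigenvalueP [v hv vn0].
  apply: (hst z v^T); first by apply: contra vn0 => /eqP h; rewrite -[v]trmxK h trmx0.
  by rewrite -[Mc]trmxK -trmx_mul hv linearZ.
have CH := Cayley_Hamilton Mc.
rewrite horner_mx_sum hrs size_prod_XsubC in CH.
have E : Mc ^+ k *m (\sum_(i < (size rs).+1) (\prod_(z <- rs) ('X - z%:P))`_i *: Mc ^+ i)
   = \sum_(i < (size rs).+1) (\prod_(z <- rs) ('X - z%:P))`_i *: Mc ^+ (k + i).
  rewrite mulmx_sumr; apply: eq_bigr => i _.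
  by rewrite -scalemxAr mulmxE -exprD.
rewrite CH mulmx0 in E.
move/matrixP: E => /(_ a b).
rewrite summxE mxE => ->.
rewrite /pactn; apply: eq_bigr => i _.
by rewrite mxE.
Qed.

End MxPart.

Lemma sumR_big (n : nat) (f : nat -> R) : sumR n f = \sum_(i < n) f i.
Proof.
elim: n => [|n IH] /=; first by rewrite big_ord0.
by rewrite big_ord_recr /= IH.
Qed.

Section Trans.
Variable m' : nat.
Local Notation m := m'.+1.
Variable M : nat -> nat -> R.
Definition Mm : 'M[R]_m := \matrix_(i, j) M i j.

Lemma matpow_mx k i j : (i < m)%N -> (j < m)%N ->
  matpow m M k i j = (Mm ^+ k) (inord i) (inord j).
Proof.
elim: k i j => [|k IH] i j hi hj /=.
  rewrite expr0 mxE /idmat.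
  case: (PeanoNat.Nat.eqb_spec i j) => [->|hne]; first by rewrite eqxx.
  case: eqP => // /(congr1 val) /=; rewrite !inordK // => h; by case: hne.
rewrite /matmul sumR_big exprSr -mulmxE mxE.
apply: eq_bigr => l _.
by rewrite IH // mxE inordK // inord_val.
Qed.

Local Notation C := R[i].
Definition Mc : 'M[C]_m := map_mx (real_complex R) Mm.

Lemma Mc_pow k : Mc ^+ k = map_mx (real_complex R) (Mm ^+ k).
Proof.
elim: k => [|k IH]; first by rewrite !expr0 map_mx1.
by rewrite !exprSr IH -!mulmxE map_mxM.
Qed.

Import Normc.
Lemma normc_real (x : R) : normc (x%:C)%C = Rabs x.
Proof. by rewrite /normc /= expr0n /= addr0 sqrtr_sqr. Qed.


Lemma Re_sum n (f : 'I_n -> C) : complex.Re (\sum_(i < n) f i) = \sum_(i < n) complex.Re (f i).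
Proof.
elim: n f => [|n IH] f; first by rewrite !big_ord0.
rewrite !big_ord_recr /= -IH.
by case: (\sum_(i < n) f (widen_ord (leqnSn n) i)) => [? ?]; case: (f ord_max).
Qed.

Lemma Im_sum n (f : 'I_n -> C) : complex.Im (\sum_(i < n) f i) = \sum_(i < n) complex.Im (f i).
Proof.
elim: n f => [|n IH] f; first by rewrite !big_ord0.
rewrite !big_ord_recr /= -IH.
by case: (\sum_(i < n) f (widen_ord (leqnSn n) i)) => [? ?]; case: (f ord_max).
Qed.

Lemma eig_stable : schur_stable m M ->
  forall z (v : 'cV[C]_m), v != 0 -> Mc *m v = z *: v -> normc z < 1.
Proof.
move=> hs z v vn0 hv.
pose x j := complex.Re (v (inord j) 0).
pose y j := complex.Im (v (inord j) 0).
have key : is_complex_eigenvalue m M (complex.Re z) (complex.Im z).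
  exists x, y; split.
    apply: Classical_Prop.NNPP => hn; move/negP: vn0; apply; apply/eqP/matrixP => i k.
    rewrite (ord1 k) mxE.
    have [hx hy] : x i = 0 /\ y i = 0.
      apply: Classical_Prop.NNPP => h2; apply: hn; exists i; split; first by apply: ssrnat.ltP; exact: ltn_ord.
      exact: Classical_Prop.not_and_or h2.
    move: hx hy; rewrite /x /y inord_val.
    by case: (v i 0) => ? ? /= -> ->.
  move=> i /ssrnat.ltP hi.
  move/matrixP: hv => /(_ (inord i) 0).
  rewrite !mxE => he.
  have hre := congr1 (@complex.Re R) he; have him := congr1 (@complex.Im R) he.
  rewrite Re_sum in hre; rewrite Im_sum in him.
  rewrite /mulmv !sumR_big; split.
  - rewrite [RHS](_ : _ = complex.Re (z * v (inord i) 0)); last first.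
      by rewrite /x /y; move: (v (inord i) 0) => [c d]; case: (z) => a b /=.
    rewrite -hre.
    apply: eq_bigr => j _; rewrite /x !mxE inordK // inord_val.
    by case: (v j 0) => ? ? /=; rewrite mul0r subr0.
  - rewrite [RHS](_ : _ = complex.Im (z * v (inord i) 0)); last first.
      rewrite /x /y; move: (v (inord i) 0) => [c d]; case: (z) => a b /=. by rewrite addrC.
    rewrite -him.
    apply: eq_bigr => j _; rewrite /y !mxE inordK // inord_val.
    by case: (v j 0) => ? ? /=; rewrite mul0r addr0.
have := hs _ _ key.
case: z {hv key} => a b /= /RltP h.
rewrite -sqrtr1 ltr_sqrt ?ltr01 //.
Qed.

End Trans.

Lemma pow_summable (m : nat) (M : nat -> nat -> R) : (1 <= m)%coq_nat -> schur_stable m M ->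
  forall a b, (a < m)%coq_nat -> (b < m)%coq_nat ->
  exists B : R, forall n, Rle (sumR n (fun k => Rabs (matpow m M k a b))) B.
Proof.
case: m M => [|m'] M h1; first by move/ssrnat.leP: h1.
move=> hs a b /ssrnat.ltP ha /ssrnat.ltP hb.
have [B hB] := mx_pow_bound (eig_stable hs) (inord a) (inord b).
exists B => n; apply/RleP.
rewrite sumR_big.
apply: le_trans (hB n); rewrite le_eqVlt; apply/orP; left; apply/eqP.
apply: eq_bigr => k _.
by rewrite matpow_mx // Mc_pow mxE normc_real.
Qed.

End MC.

Set Bullet Behavior "Strict Subproofs".
Open Scope R_scope.

Lemma sumR_ext n f g : (forall i, (i < n)%nat -> f i = g i) -> sumR n f = sumR n g.
Proof. induction n; intros H; simpl; auto. rewrite IHn by (intros; apply H; lia). rewrite H by lia. auto. Qed.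

Lemma sumR_plus n f g : sumR n (fun i => f i + g i) = sumR n f + sumR n g.
Proof. induction n; simpl; [lra|]. rewrite IHn. lra. Qed.

Lemma sumR_scal n c f : sumR n (fun i => c * f i) = c * sumR n f.
Proof. induction n; simpl; [lra|]. rewrite IHn. lra. Qed.

Lemma sumR_le n f g : (forall i, (i < n)%nat -> f i <= g i) -> sumR n f <= sumR n g.
Proof. induction n; intros H; simpl; [lra|]. assert (f n <= g n) by (apply H; lia).
  assert (sumR n f <= sumR n g) by (apply IHn; intros; apply H; lia). lra. Qed.

Lemma sumR_nonneg n f : (forall i, (i < n)%nat -> 0 <= f i) -> 0 <= sumR n f.
Proof. intros H. replace 0 with (sumR n (fun _ => 0)).
  - apply sumR_le; auto.
  - clear H; induction n; simpl; auto. rewrite IHn; lra. Qed.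

Lemma sumR_single n f a : (forall i, (i < n)%nat -> 0 <= f i) -> (a < n)%nat -> f a <= sumR n f.
Proof. induction n; intros H Ha; [lia|]. simpl.
  destruct (Nat.eq_dec a n) as [->|Hne].
  - assert (0 <= sumR n f) by (apply sumR_nonneg; intros; apply H; lia). lra.
  - assert (f a <= sumR n f) by (apply IHn; [intros; apply H; lia | lia]).
    assert (0 <= f n) by (apply H; lia). lra. Qed.

Fixpoint cnt (Pr : nat -> Prop) (n : nat) : nat :=
  match n with
  | O => O
  | S n' => (cnt Pr n' + (if excluded_middle_informative (Pr n') then 1 else 0))%nat
  end.

Lemma cnt_mono (A B : nat -> Prop) n : (forall j, (j < n)%nat -> A j -> B j) -> (cnt A n <= cnt B n)%nat.
Proof. induction n; intros H; simpl; [lia|].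
  assert (cnt A n <= cnt B n)%nat by (apply IHn; intros; apply H; auto; lia).
  destruct (excluded_middle_informative (A n)); destruct (excluded_middle_informative (B n)); try lia.
  exfalso; apply n0; apply H; auto. Qed.

Lemma cnt_strict (A B : nat -> Prop) n : (forall j, (j < n)%nat -> A j -> B j) ->
  forall a, (a < n)%nat -> B a -> ~ A a -> (cnt A n < cnt B n)%nat.
Proof. induction n; intros H a Ha HB HA; [lia|]. simpl.
  destruct (Nat.eq_dec a n) as [->|Hne].
  - assert (cnt A n <= cnt B n)%nat by (apply cnt_mono; intros; apply H; auto; lia).
    destruct (excluded_middle_informative (A n)); destruct (excluded_middle_informative (B n)); tauto || lia.
  - assert (cnt A n < cnt B n)%nat by (apply IHn with (a := a); [intros; apply H; auto; lia | lia | auto | auto]).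
    destruct (excluded_middle_informative (A n)); destruct (excluded_middle_informative (B n)); try lia.
    exfalso; apply n0; apply H; auto. Qed.

Lemma cnt_disj (A B : nat -> Prop) n : (forall j, (j < n)%nat -> A j -> B j -> False) ->
  (cnt A n + cnt B n <= n)%nat.
Proof. induction n; intros H; simpl; [lia|].
  assert (cnt A n + cnt B n <= n)%nat by (apply IHn; intros j Hj HA HB; apply (H j); auto).
  destruct (excluded_middle_informative (A n)); destruct (excluded_middle_informative (B n)); try lia.
  exfalso; eapply H; eauto. Qed.

Lemma cnt_pos (A : nat -> Prop) n a : (a < n)%nat -> A a -> (1 <= cnt A n)%nat.
Proof. intros Ha HA. apply Nat.le_trans with (cnt (fun j => j = a) n).
  - clear HA. induction n; [lia|]. simpl. destruct (Nat.eq_dec a n) as [->|Hne].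
    + destruct (excluded_middle_informative (n = n)); [lia| tauto].
    + specialize (IHn ltac:(lia)). lia.
  - apply cnt_mono. intros; subst; auto. Qed.

Lemma crt_cross (R0 : nat -> nat -> Prop) (A : nat -> Prop) r v :
  clos_refl_trans nat R0 r v -> ~ A r -> A v -> exists a b, R0 a b /\ ~ A a /\ A b.
Proof. intros H. apply clos_rt_rt1n in H. induction H; intros Hr Hv; [tauto|].
  destruct (classic (A y)) as [Hy|Hy].
  - exists x, y; auto.
  - apply IHclos_refl_trans_1n; auto. Qed.

Fixpoint maxL (n : nat) (f : nat -> R) : R :=
  match n with O => f O | S n' => Rmax (maxL n' f) (f (S n')) end.
Fixpoint minL (n : nat) (f : nat -> R) : R :=
  match n with O => f O | S n' => Rmin (minL n' f) (f (S n')) end.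

Lemma maxL_ge n f i : (i <= n)%nat -> f i <= maxL n f.
Proof. induction n; intros H; simpl.
  - replace i with 0%nat by lia. lra.
  - destruct (Nat.eq_dec i (S n)) as [->|Hne]; [apply Rmax_r|].
    eapply Rle_trans; [apply IHn; lia | apply Rmax_l]. Qed.

Lemma maxL_att n f : exists i, (i <= n)%nat /\ maxL n f = f i.
Proof. induction n; simpl. exists 0%nat; auto.
  destruct IHn as [i [Hi He]]. unfold Rmax. destruct (Rle_dec (maxL n f) (f (S n))).
  - exists (S n); auto.
  - exists i; split; auto. Qed.

Lemma minL_le n f i : (i <= n)%nat -> minL n f <= f i.
Proof. induction n; intros H; simpl.
  - replace i with 0%nat by lia. lra.
  - destruct (Nat.eq_dec i (S n)) as [->|Hne]; [apply Rmin_r|].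
    eapply Rle_trans; [apply Rmin_l | apply IHn; lia]. Qed.

Lemma minL_att n f : exists i, (i <= n)%nat /\ minL n f = f i.
Proof. induction n; simpl. exists 0%nat; auto.
  destruct IHn as [i [Hi He]]. unfold Rmin. destruct (Rle_dec (minL n f) (f (S n))).
  - exists i; split; auto.
  - exists (S n); auto. Qed.

Lemma Un_cv_ext u v l : (forall n, u n = v n) -> Un_cv u l -> Un_cv v l.
Proof. intros He H eps Heps. destruct (H eps Heps) as [N0 HN0]. exists N0. intros n Hn.
  rewrite <- He. auto. Qed.

Lemma Un_cv_const c : Un_cv (fun _ => c) c.
Proof. intros eps Heps. exists 0%nat. intros. unfold Rdist. rewrite Rminus_diag, Rabs_R0. lra. Qed.

Lemma Un_cv_shift u l T : Un_cv u l -> Un_cv (fun t => u (t + T)%nat) l.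
Proof. intros H eps Heps. destruct (H eps Heps) as [N0 HN0]. exists N0. intros n Hn.
  apply HN0. lia. Qed.

Lemma Un_cv_squeeze u v w l : Un_cv u l -> Un_cv v l -> (forall n, u n <= w n <= v n) -> Un_cv w l.
Proof. intros Hu Hv Hw eps Heps. destruct (Hu eps Heps) as [N1 H1]. destruct (Hv eps Heps) as [N2 H2].
  exists (N1 + N2)%nat. intros n Hn. specialize (H1 n ltac:(lia)). specialize (H2 n ltac:(lia)).
  unfold Rdist in *. apply Rabs_def2 in H1. apply Rabs_def2 in H2. specialize (Hw n).
  apply Rabs_def1; lra. Qed.

Section Cons.
Variable N : nat.
Variable P : nat -> nat -> nat -> R.
Variable E : nat -> nat -> nat -> Prop.
Variable delta : R.
Variable g : nat -> R.
Hypothesis HN : (1 <= N)%nat.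
Hypothesis Hdelta : 0 < delta.
Hypothesis HPnn : forall t i j, (i < N)%nat -> (j < N)%nat -> 0 <= P t i j.
Hypothesis HPsum : forall t i, (i < N)%nat -> sumR N (fun j => P t i j) = 1.
Hypothesis HPdiag : forall t i, (i < N)%nat -> delta <= P t i i.
Hypothesis HPedge : forall t a b, (a < N)%nat -> (b < N)%nat -> E t a b -> delta <= P t b a.
Hypothesis Hg : forall t, 0 <= g t.

Definition Sg n := sumR n g.

Inductive tr (t0 : nat) : nat -> nat -> nat -> Prop :=
| tr0 : forall j, (j < N)%nat -> tr t0 t0 j j
| trS : forall t j a i, tr t0 t j a -> (i < N)%nat -> (a = i \/ E t a i) -> tr t0 (S t) j i.

Lemma tr_le t0 t j i : tr t0 t j i -> (t0 <= t)%nat /\ (j < N)%nat /\ (i < N)%nat.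
Proof. induction 1; lia. Qed.

Lemma tr_trans t0 t1 t2 j a i : tr t0 t1 j a -> tr t1 t2 a i -> tr t0 t2 j i.
Proof. intros H1 H2. induction H2; auto. eapply trS; eauto. Qed.

Lemma tr_stay t0 d j : (j < N)%nat -> tr t0 (t0 + d) j j.
Proof. intros Hj. induction d. rewrite Nat.add_0_r. now constructor.
  rewrite Nat.add_succ_r. eapply trS; eauto. Qed.

Lemma tr_stay' t0 t1 j : (j < N)%nat -> (t0 <= t1)%nat -> tr t0 t1 j j.
Proof. intros. replace t1 with (t0 + (t1 - t0))%nat by lia. now apply tr_stay. Qed.

Lemma tr_window t0 t t1 a b : (a < N)%nat -> (b < N)%nat -> (t0 <= t)%nat -> (t < t1)%nat ->
  E t a b -> tr t0 t1 a b.
Proof. intros. apply tr_trans with (t1 := S t) (a := b).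
  - eapply trS; eauto. now apply tr_stay'.
  - now apply tr_stay'. Qed.

Section Traj.
Variable y v : nat -> nat -> R.
Hypothesis Hy : forall t i, (i < N)%nat -> y (S t) i = sumR N (fun j => P t i j * y t j) + v t i.
Hypothesis Hv : forall t i, (i < N)%nat -> Rabs (v t i) <= g t.

Lemma step_lower t c a i : (forall l, (l < N)%nat -> c <= y t l) -> (i < N)%nat -> (a < N)%nat ->
  c + P t i a * (y t a - c) - g t <= y (S t) i.
Proof.
  intros Hc Hi Ha. rewrite Hy by auto.
  assert (Hs : sumR N (fun j => P t i j * y t j) = c * sumR N (fun j => P t i j) + sumR N (fun j => P t i j * (y t j - c))).
  { rewrite <- sumR_scal, <- sumR_plus. apply sumR_ext; intros; ring. }
  rewrite Hs, HPsum by auto.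
  assert (P t i a * (y t a - c) <= sumR N (fun j => P t i j * (y t j - c))).
  { apply sumR_single with (f := fun j => P t i j * (y t j - c)); auto.
    intros l Hl. apply Rmult_le_pos; [apply HPnn; auto | specialize (Hc l Hl); lra]. }
  assert (- g t <= v t i). { specialize (Hv t i Hi). pose proof (Rle_abs (- v t i)). rewrite Rabs_Ropp in H0. lra. }
  lra.
Qed.

Lemma inv_lower t0 c : (forall l, (l < N)%nat -> c <= y t0 l) ->
  forall d l, (l < N)%nat -> c - (Sg (t0 + d) - Sg t0) <= y (t0 + d)%nat l.
Proof.
  intros Hc d. induction d; intros l Hl.
  - rewrite Nat.add_0_r. specialize (Hc l Hl). lra.
  - rewrite Nat.add_succ_r.
    pose proof (step_lower (t0 + d) (c - (Sg (t0 + d) - Sg t0)) l l IHd Hl Hl) as H.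
    assert (0 <= P (t0 + d)%nat l l * (y (t0 + d)%nat l - (c - (Sg (t0 + d) - Sg t0)))).
    { apply Rmult_le_pos; [apply HPnn; auto | specialize (IHd l Hl); lra]. }
    unfold Sg in *; simpl. lra.
Qed.

Lemma infl_lower t0 c : (forall l, (l < N)%nat -> c <= y t0 l) ->
  forall t j i, tr t0 t j i -> c - (Sg t - Sg t0) + delta ^ (t - t0) * (y t0 j - c) <= y t i.
Proof.
  intros Hc t j i H. induction H as [j Hj | t j a i H IH Hi Hor].
  - rewrite Nat.sub_diag. simpl. lra.
  - destruct (tr_le _ _ _ _ H) as [Ht [Hj Ha]].
    set (c' := c - (Sg t - Sg t0)).
    assert (Hinv : forall l, (l < N)%nat -> c' <= y t l).
    { intros l Hl. pose proof (inv_lower t0 c Hc (t - t0) l Hl) as X.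
      replace (t0 + (t - t0))%nat with t in X by lia. exact X. }
    pose proof (step_lower t c' a i Hinv Hi Ha) as Hst.
    assert (HPd : delta <= P t i a).
    { destruct Hor as [<- | He]; [apply HPdiag; auto | apply HPedge; auto]. }
    set (q := delta ^ (t - t0) * (y t0 j - c)).
    assert (Hq : 0 <= q). { apply Rmult_le_pos; [apply pow_le; lra | specialize (Hc j Hj); lra]. }
    assert (Hm : delta * q <= P t i a * (y t a - c')).
    { apply Rmult_le_compat; try lra. unfold c', q. lra. }
    replace (S t - t0)%nat with (S (t - t0)) by lia.
    unfold q, c' in *. unfold Sg in *. simpl. lra.
Qed.

End Traj.
Section Comb.
Variable Mw : nat.
Hypothesis Hconn : forall k, quasi_strongly_connected N
  (fun a b => exists t, (k <= t <= k + Mw)%nat /\ E t a b).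

Definition Anc t t1 i j := (j < N)%nat /\ tr t t1 j i.

Lemma anc_mono t t' t1 i j : (t <= t')%nat -> Anc t' t1 i j -> Anc t t1 i j.
Proof. intros Ht [Hj H]. split; auto. eapply tr_trans; [|exact H]. now apply tr_stay'. Qed.

Lemma anc_grow t t1 i r : (i < N)%nat -> (t + S Mw <= t1)%nat ->
  clos_refl_trans nat (fun a b => (a < N)%nat /\ (b < N)%nat /\ exists s, (t <= s <= t + Mw)%nat /\ E s a b) r i ->
  Anc (t + S Mw) t1 i r \/ exists a, (a < N)%nat /\ Anc t t1 i a /\ ~ Anc (t + S Mw) t1 i a.
Proof.
  intros Hi Ht Hc. destruct (classic (Anc (t + S Mw) t1 i r)) as [H|H]; [now left|right].
  destruct (crt_cross _ (Anc (t + S Mw) t1 i) r i Hc H) as [a [b [[Ha [Hb [s [Hs He]]]] [Hna Hb']]]].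
  { split; auto. now apply tr_stay'. }
  exists a. split; auto. split; auto. split; auto.
  destruct Hb' as [_ Hb'].
  apply tr_trans with (t1 := (t + S Mw)%nat) (a := b); auto.
  apply tr_window with (t := s); auto; lia.
Qed.

Lemma common_anc t0 i i' : (i < N)%nat -> (i' < N)%nat ->
  exists j, (j < N)%nat /\ tr t0 (t0 + (N - 1) * S Mw) j i /\ tr t0 (t0 + (N - 1) * S Mw) j i'.
Proof.
  intros Hi Hi'. set (L := S Mw). set (t1 := (t0 + (N - 1) * L)%nat).
  assert (Hcl : forall s, (s <= N - 1)%nat ->
    (exists j, Anc (t0 + (N - 1 - s) * L) t1 i j /\ Anc (t0 + (N - 1 - s) * L) t1 i' j) \/
    (s + 2 <= cnt (Anc (t0 + (N - 1 - s) * L) t1 i) N + cnt (Anc (t0 + (N - 1 - s) * L) t1 i') N)%nat).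
  { induction s; intros Hs.
    - right. rewrite Nat.sub_0_r. fold t1.
      pose proof (cnt_pos (Anc t1 t1 i) N i Hi (conj Hi (tr0 _ _ Hi))).
      pose proof (cnt_pos (Anc t1 t1 i') N i' Hi' (conj Hi' (tr0 _ _ Hi'))). lia.
    - set (t := (t0 + (N - 1 - S s) * L)%nat).
      assert (Ht' : (t0 + (N - 1 - s) * L)%nat = (t + L)%nat).
      { unfold t. replace (N - 1 - s)%nat with (S (N - 1 - S s)) by lia. simpl. lia. }
      assert (HtL : (t + L <= t1)%nat).
      { rewrite <- Ht'. unfold t1. apply Nat.add_le_mono_l. apply Nat.mul_le_mono_r. lia. }
      specialize (IHs ltac:(lia)). rewrite Ht' in IHs.
      destruct (classic (exists j, Anc t t1 i j /\ Anc t t1 i' j)) as [Hex|Hnex]; [now left|right].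
      destruct IHs as [[j [H1 H2]]|IHs].
      + exfalso. apply Hnex. exists j. split; apply anc_mono with (t' := (t + L)%nat); auto; lia.
      + destruct (Hconn t) as [r [Hr Hreach]].
        assert (Hm1 := cnt_mono (Anc (t + L) t1 i) (Anc t t1 i) N (fun j _ H => anc_mono t (t + L) t1 i j ltac:(lia) H)).
        assert (Hm2 := cnt_mono (Anc (t + L) t1 i') (Anc t t1 i') N (fun j _ H => anc_mono t (t + L) t1 i' j ltac:(lia) H)).
        destruct (anc_grow t t1 i r Hi HtL (Hreach i Hi)) as [Hr1 | [a [Ha [Ha1 Ha2]]]].
        * destruct (anc_grow t t1 i' r Hi' HtL (Hreach i' Hi')) as [Hr2 | [a [Ha [Ha1 Ha2]]]].
          -- exfalso. apply Hnex. exists r. split; apply anc_mono with (t' := (t + L)%nat); auto; lia.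
          -- assert (cnt (Anc (t + L) t1 i') N < cnt (Anc t t1 i') N)%nat.
             { eapply cnt_strict; eauto. intros j _ H. apply anc_mono with (t' := (t + L)%nat); auto; lia. }
             lia.
        * assert (cnt (Anc (t + L) t1 i) N < cnt (Anc t t1 i) N)%nat.
          { eapply cnt_strict; eauto. intros j _ H. apply anc_mono with (t' := (t + L)%nat); auto; lia. }
          lia. }
  destruct (Hcl (N - 1)%nat (le_n _)) as [[j [[Hj H1] [_ H2]]]|H].
  - replace (N - 1 - (N - 1))%nat with 0%nat in * by lia. rewrite Nat.mul_0_l, Nat.add_0_r in *.
    exists j. auto.
  - replace (N - 1 - (N - 1))%nat with 0%nat in * by lia. rewrite Nat.mul_0_l, Nat.add_0_r in *.
    destruct (classic (exists j, Anc t0 t1 i j /\ Anc t0 t1 i' j)) as [[j [[Hj H1] [_ H2]]]|Hnex].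
    + exists j; auto.
    + exfalso. pose proof (cnt_disj (Anc t0 t1 i) (Anc t0 t1 i') N (fun j _ H1 H2 => Hnex (ex_intro _ j (conj H1 H2)))).
      lia.
Qed.

Section Main.
Variable x w : nat -> nat -> R.
Hypothesis Hx : forall t i, (i < N)%nat -> x (S t) i = sumR N (fun j => P t i j * x t j) + w t i.
Hypothesis Hw : forall t i, (i < N)%nat -> Rabs (w t i) <= g t.

Definition mx t := maxL (N - 1) (x t).
Definition mn t := minL (N - 1) (x t).

Lemma x_le_mx t i : (i < N)%nat -> x t i <= mx t.
Proof. intros; apply maxL_ge; lia. Qed.
Lemma mn_le_x t i : (i < N)%nat -> mn t <= x t i.
Proof. intros; apply minL_le; lia. Qed.
Lemma mn_le_mx t : mn t <= mx t.
Proof. eapply Rle_trans; [apply (mn_le_x t 0%nat)|apply x_le_mx]; lia. Qed.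

Lemma mx_step t : mx (S t) <= mx t + g t.
Proof.
  destruct (maxL_att (N - 1) (x (S t))) as [i [Hi He]]. unfold mx at 1. rewrite He.
  assert (Hi' : (i < N)%nat) by lia. rewrite Hx by auto.
  assert (sumR N (fun j => P t i j * x t j) <= sumR N (fun j => mx t * P t i j)).
  { apply sumR_le. intros j Hj. rewrite Rmult_comm. apply Rmult_le_compat_r; [apply HPnn; auto|apply x_le_mx; auto]. }
  rewrite sumR_scal, HPsum in H by auto.
  pose proof (Rle_abs (w t i)). specialize (Hw t i Hi'). lra.
Qed.

Lemma mn_step t : mn t - g t <= mn (S t).
Proof.
  destruct (minL_att (N - 1) (x (S t))) as [i [Hi He]]. unfold mn at 2. rewrite He.
  assert (Hi' : (i < N)%nat) by lia. rewrite Hx by auto.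
  assert (sumR N (fun j => mn t * P t i j) <= sumR N (fun j => P t i j * x t j)).
  { apply sumR_le. intros j Hj. rewrite Rmult_comm. apply Rmult_le_compat_l; [apply HPnn; auto|apply mn_le_x; auto]. }
  rewrite sumR_scal, HPsum in H by auto.
  pose proof (Rle_abs (- w t i)). rewrite Rabs_Ropp in H0. specialize (Hw t i Hi'). lra.
Qed.

Lemma contract t0 : mx (t0 + (N - 1) * S Mw) - mn (t0 + (N - 1) * S Mw) <=
  (1 - delta ^ ((N - 1) * S Mw)) * (mx t0 - mn t0) + 2 * (Sg (t0 + (N - 1) * S Mw) - Sg t0).
Proof.
  set (T := ((N - 1) * S Mw)%nat).
  destruct (maxL_att (N - 1) (x (t0 + T)%nat)) as [i [Hi He]].
  destruct (minL_att (N - 1) (x (t0 + T)%nat)) as [i' [Hi' He']].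
  unfold mx at 1, mn at 1. rewrite He, He'.
  destruct (common_anc t0 i i' ltac:(lia) ltac:(lia)) as [j [Hj [H1 H2]]].
  fold T in H1, H2.
  pose proof (infl_lower x w Hx Hw t0 (mn t0) (fun l Hl => mn_le_x t0 l Hl) _ _ _ H2) as Lo.
  assert (Hy' : forall t i, (i < N)%nat -> (fun t i => - x t i) (S t) i =
     sumR N (fun j => P t i j * (fun t i => - x t i) t j) + (fun t i => - w t i) t i).
  { intros t k Hk. simpl. rewrite Hx by auto.
    rewrite (sumR_ext N (fun j => P t k j * - x t j) (fun j => -1 * (P t k j * x t j))) by (intros; ring).
    rewrite sumR_scal. ring. }
  assert (Hv' : forall t i, (i < N)%nat -> Rabs ((fun t i => - w t i) t i) <= g t).
  { intros t k Hk. simpl. rewrite Rabs_Ropp. auto. }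
  pose proof (infl_lower (fun t i => - x t i) (fun t i => - w t i) Hy' Hv' t0 (- mx t0)
     (fun l Hl => Ropp_le_contravar _ _ (x_le_mx t0 l Hl)) _ _ _ H1) as Up.
  simpl in Up.
  replace (t0 + T - t0)%nat with T in Lo, Up by lia.
  assert (0 <= delta ^ T) by (apply pow_le; lra).
  lra.
Qed.

Lemma mn_lower t : mn 0 - Sg t <= mn t.
Proof. induction t; unfold Sg in *; simpl; [lra|]. pose proof (mn_step t). lra. Qed.
Lemma mx_upper t : mx t <= mx 0 + Sg t.
Proof. induction t; unfold Sg in *; simpl; [lra|]. pose proof (mx_step t). lra. Qed.
Lemma Sg_nonneg t : 0 <= Sg t.
Proof. unfold Sg. apply sumR_nonneg. auto. Qed.

Lemma consensus_lim : (exists Bg, forall n, Sg n <= Bg) ->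
  exists z, forall i, (i < N)%nat -> Un_cv (fun k => x k i) z.
Proof.
  intros [Bg HB].
  assert (Hgr : Un_growing Sg). { intros n. unfold Sg; simpl. pose proof (Hg n). lra. }
  destruct (growing_cv Sg Hgr) as [ls Hls].
  { exists Bg. intros y [n ->]. apply HB. }
  destruct (decreasing_cv (fun t => mx t - Sg t)) as [la Hla].
  { intros n. simpl. pose proof (mx_step n). unfold Sg in *; simpl. lra. }
  { exists (2 * Bg - mn 0). intros y [n ->]. unfold opp_seq.
    pose proof (mn_le_mx n). pose proof (mn_lower n). pose proof (HB n). lra. }
  destruct (growing_cv (fun t => mn t + Sg t)) as [lb Hlb].
  { intros n. simpl. pose proof (mn_step n). unfold Sg in *; simpl. lra. }
  { exists (mx 0 + 2 * Bg). intros y [n ->].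
    pose proof (mn_le_mx n). pose proof (mx_upper n). pose proof (HB n). lra. }
  assert (Hmx : Un_cv mx (la + ls)).
  { eapply Un_cv_ext; [|apply (CV_plus _ _ _ _ Hla Hls)]. intros n; simpl; ring. }
  assert (Hmn : Un_cv mn (lb - ls)).
  { eapply Un_cv_ext; [|apply (CV_minus _ _ _ _ Hlb Hls)]. intros n; simpl; ring. }
  set (T := ((N - 1) * S Mw)%nat).
  set (eps := delta ^ T).
  assert (Heps : 0 < eps) by (apply pow_lt; lra).
  set (d := la + ls - (lb - ls)).
  assert (HD : Un_cv (fun t => mx t - mn t) d) by (apply CV_minus; auto).
  assert (HDs : Un_cv (fun t => mx (t + T)%nat - mn (t + T)%nat) d) by (apply (Un_cv_shift (fun t => mx t - mn t)); auto).
  assert (HR : Un_cv (fun t => (1 - eps) * (mx t - mn t) + 2 * (Sg (t + T)%nat - Sg t)) ((1 - eps) * d + 2 * (ls - ls))).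
  { apply CV_plus; apply CV_mult; try apply Un_cv_const; auto.
    apply CV_minus; auto. apply (Un_cv_shift Sg); auto. }
  assert (Hle : d <= (1 - eps) * d + 2 * (ls - ls)).
  { eapply Rle_cv_lim; [|exact HDs|exact HR]. intros n. simpl.
    pose proof (contract n). exact H. }
  assert (Hd0 : 0 <= d).
  { eapply Rle_cv_lim; [|apply (Un_cv_const 0)|exact HD]. intros n. simpl. pose proof (mn_le_mx n). lra. }
  assert (Hd : d = 0) by nra.
  exists (la + ls). intros i Hi.
  apply Un_cv_squeeze with (u := mn) (v := mx); auto.
  - replace (la + ls) with (lb - ls) by (unfold d in Hd; lra). auto.
  - intros n. split; [apply mn_le_x|apply x_le_mx]; auto.
Qed.

End Main.
End Comb.
End Cons.

Lemma list_bound (A : Type) (l : list A) (f : A -> R) : (forall q, 0 <= f q) ->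
  exists B, 0 <= B /\ forall q, In q l -> f q <= B.
Proof. intros Hf. induction l as [|a l IH].
  - exists 0. split; [lra|]. intros q [].
  - destruct IH as [B [HB H]]. exists (f a + B). split; [pose proof (Hf a); lra|].
    intros q [<-|Hq]; [lra|]. pose proof (H q Hq). pose proof (Hf a). lra. Qed.

Lemma sumR_zero n : sumR n (fun _ => 0) = 0.
Proof. induction n; simpl; auto. rewrite IHn; lra. Qed.

Lemma sumR_idmat n i : (i < n)%nat -> sumR n (fun j => idmat i j) = 1.
Proof.
  assert (H0 : forall k, (k <= i)%nat -> sumR k (fun j => idmat i j) = 0).
  { induction k; intros Hk; simpl; auto. rewrite IHk by lia. unfold idmat.
    destruct (Nat.eqb_spec i k); [lia|lra]. }
  induction n; intros Hi; [lia|]. simpl.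
  destruct (Nat.eq_dec i n) as [->|Hne].
  - rewrite H0 by lia. unfold idmat. rewrite Nat.eqb_refl. lra.
  - rewrite IHn by lia. unfold idmat. destruct (Nat.eqb_spec i n); [lia|lra].
Qed.

Lemma sumR_abs n f : Rabs (sumR n f) <= sumR n (fun i => Rabs (f i)).
Proof. induction n; simpl. rewrite Rabs_R0; lra.
  eapply Rle_trans; [apply Rabs_triang|]. lra. Qed.

Lemma sum_sum_bound m (f : nat -> nat -> R) :
  (forall l, (l < m)%nat -> exists B, forall n, sumR n (fun t => f t l) <= B) ->
  exists B, forall n, sumR n (fun t => sumR m (fun l => f t l)) <= B.
Proof.
  induction m; intros H.
  - exists 0. intros n. simpl. rewrite sumR_zero. lra.
  - destruct IHm as [B1 H1]. { intros l Hl. apply H. lia. }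
    destruct (H m ltac:(lia)) as [B2 H2]. exists (B1 + B2). intros n. simpl.
    rewrite sumR_plus. specialize (H1 n). specialize (H2 n). lra.
Qed.

Lemma inv_le_div a b c : 0 < a -> 0 < b -> b <= c * a -> / a <= c / b.
Proof. intros Ha Hb H.
  replace (/ a) with ((/ a * / b) * b) by (field; lra).
  replace (c / b) with ((/ a * / b) * (c * a)) by (field; lra).
  apply Rmult_le_compat_l; auto.
  apply Rmult_le_pos; left; apply Rinv_0_lt_compat; auto. Qed.

Definition posp (a : R) : R := if Rlt_dec 0 a then a else 1.
Lemma posp_pos a : 0 < posp a.
Proof. unfold posp. destruct (Rlt_dec 0 a); lra. Qed.

Theorem lemma3
  (N m : nat) (HN : (1 <= N)%nat) (Hm : (2 <= m)%nat)
  (C K5 K6 : nat -> R)   (* C, K5 : 1 x m (indexed by column); K6 : m x 1 *)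
  (Hstab : schur_stable m (fun i j => integrator i j + K6 i * C j))
  (e0 : nat -> R)        (* e0 in R^(N m) *)
  (Q : Type) (Qlist : list Q) (HQfin : forall q : Q, In q Qlist)
  (alpha : Q -> nat -> nat -> R)
  (Halpha_nonneg : forall q i j, 0 <= alpha q i j)
  (Halpha_noself : forall q i, alpha q i i = 0)
  (sigma : nat -> Q)
  (Hconn : UJQSC N alpha sigma)
  (Z : nat -> nat -> R)  (* Z k i = \bar z_{i+1}[k]; Z 0 arbitrary *)
  (Hrec : forall k i, (i < N)%nat ->
     Z (S k) i =
       sumR N (fun j => (idmat i j - Smat N alpha sigma k i j) * Z k j)
       + mulmv (N * m)
           (kron 1 m idmat
              (matmul m
                 (fun _ j => sumR m (fun l => K5 l * K6 l) * C j)
                 (matpow m (fun i j => integrator i j + K6 i * C j) k)))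
           e0 i) :
  exists zstar : R, forall i, (i < N)%nat -> Un_cv (fun k => Z k i) zstar.
Proof.
  destruct Hconn as [Mw [_ Hc]].
  set (s := sumR m (fun l => K5 l * K6 l)) in Hrec.
  set (Mat := fun i j => integrator i j + K6 i * C j) in Hrec, Hstab.
  set (w := fun k i => mulmv (N * m) (kron 1 m idmat (matmul m (fun _ j => s * C j) (matpow m Mat k))) e0 i).
  set (E0 := sumR (N * m) (fun j => Rabs (e0 j))).
  set (G := fun t => sumR m (fun l => sumR m (fun l' => Rabs (s * C l') * Rabs (matpow m Mat t l' l)))).
  set (g := fun t => E0 * G t).
  assert (HE0 : 0 <= E0) by (apply sumR_nonneg; intros; apply Rabs_pos).
  assert (HG : forall t, 0 <= G t).
  { intros t. apply sumR_nonneg; intros; apply sumR_nonneg; intros. apply Rmult_le_pos; apply Rabs_pos. }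
  assert (Hg : forall t, 0 <= g t) by (intros; apply Rmult_le_pos; auto).
  assert (Hw : forall t i, (i < N)%nat -> Rabs (w t i) <= g t).
  { intros t i Hi. unfold w, mulmv.
    eapply Rle_trans; [apply sumR_abs|].
    apply Rle_trans with (sumR (N * m) (fun j => G t * Rabs (e0 j))).
    - apply sumR_le. intros j Hj. rewrite Rabs_mult. apply Rmult_le_compat_r; [apply Rabs_pos|].
      unfold kron. rewrite Rabs_mult.
      assert (Hid : Rabs (idmat (i / 1) (j / m)) <= 1).
      { unfold idmat. destruct (Nat.eqb _ _); [rewrite Rabs_R1|rewrite Rabs_R0]; lra. }
      set (r := (i mod 1)%nat). set (l := (j mod m)%nat).
      assert (Hl : (l < m)%nat) by (apply Nat.mod_upper_bound; lia).
      assert (HB : Rabs (matmul m (fun _ j0 => s * C j0) (matpow m Mat t) r l) <= G t).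
      { unfold matmul, G. eapply Rle_trans; [apply sumR_abs|].
        apply Rle_trans with (sumR m (fun l' => Rabs (s * C l') * Rabs (matpow m Mat t l' l))).
        + apply sumR_le. intros l' Hl'. rewrite Rabs_mult. lra.
        + apply sumR_single with (f := fun l0 => sumR m (fun l' => Rabs (s * C l') * Rabs (matpow m Mat t l' l0))); auto.
          intros; apply sumR_nonneg; intros; apply Rmult_le_pos; apply Rabs_pos. }
      pose proof (Rabs_pos (idmat (i / 1) (j / m))). pose proof (Rabs_pos (matmul m (fun _ j0 => s * C j0) (matpow m Mat t) r l)).
      nra.
    - rewrite sumR_scal. unfold g. fold E0. lra. }
  assert (HSg : exists Bg, forall n, Sg g n <= Bg).
  { assert (Hsum : exists B, forall n, sumR n G <= B).
    { unfold G. apply sum_sum_bound. intros l Hl.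
      apply sum_sum_bound. intros l' Hl'.
      destruct (@MC.pow_summable m Mat ltac:(lia) Hstab l' l Hl' Hl) as [B HB].
      exists (Rabs (s * C l') * B). intros n.
      rewrite sumR_scal. apply Rmult_le_compat_l; [apply Rabs_pos|apply HB]. }
    destruct Hsum as [B HB]. exists (E0 * B). intros n. unfold Sg, g.
    rewrite sumR_scal. apply Rmult_le_compat_l; auto. }
  destruct (list_bound Q Qlist (fun q => sumR N (fun i => sumR N (fun j => alpha q i j)))) as [B1 [HB1p HB1]].
  { intros q. apply sumR_nonneg; intros; apply sumR_nonneg; intros; auto. }
  destruct (list_bound Q Qlist (fun q => sumR N (fun i => sumR N (fun j => / posp (alpha q i j))))) as [B2 [HB2p HB2]].
  { intros q. apply sumR_nonneg; intros; apply sumR_nonneg; intros. left; apply Rinv_0_lt_compat, posp_pos. }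
  set (d := fun t i => deg N alpha sigma t i).
  assert (Hd0 : forall t i, 0 <= d t i) by (intros; apply sumR_nonneg; auto).
  assert (HdB : forall t i, (i < N)%nat -> d t i <= B1).
  { intros t i Hi. eapply Rle_trans; [|apply (HB1 (sigma t) (HQfin _))].
    apply sumR_single with (n := N) (f := fun i0 => sumR N (fun j => alpha (sigma t) i0 j)); auto.
    intros; apply sumR_nonneg; auto. }
  assert (Hainv : forall t b a, (a < N)%nat -> (b < N)%nat -> 0 < alpha (sigma t) b a -> / alpha (sigma t) b a <= B2).
  { intros t b a Ha Hb Hpos. eapply Rle_trans; [|apply (HB2 (sigma t) (HQfin _))].
    replace (/ alpha (sigma t) b a) with (/ posp (alpha (sigma t) b a)).
    2:{ unfold posp. destruct (Rlt_dec 0 (alpha (sigma t) b a)); [auto|lra]. }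
    apply Rle_trans with (sumR N (fun j => / posp (alpha (sigma t) b j))).
    - apply sumR_single with (n := N) (f := fun j => / posp (alpha (sigma t) b j)); auto.
      intros; left; apply Rinv_0_lt_compat, posp_pos.
    - apply sumR_single with (n := N) (f := fun i0 => sumR N (fun j => / posp (alpha (sigma t) i0 j))); auto.
      intros; apply sumR_nonneg; intros; left; apply Rinv_0_lt_compat, posp_pos. }
  set (P := fun t i j => idmat i j - Smat N alpha sigma t i j).
  assert (HPf : forall t i j, P t i j = (idmat i j + alpha (sigma t) i j) / (1 + d t i)).
  { intros t i j. pose proof (Hd0 t i). unfold P, Smat, idmat, d in *.
    destruct (Nat.eqb_spec i j) as [<-|Hne].
    - rewrite Halpha_noself. field. lra.
    - field. lra. }
  set (delta := / ((1 + B1) * (1 + B2))).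
  assert (Hidnn : forall i j, 0 <= idmat i j) by (intros; unfold idmat; destruct (Nat.eqb _ _); lra).
  apply (consensus_lim N P (fun t a b => 0 < alpha (sigma t) b a) delta g HN) with (Mw := Mw) (w := w); auto.
  - unfold delta. apply Rinv_0_lt_compat. nra.
  - intros t i j Hi Hj. rewrite HPf. pose proof (Hd0 t i). apply Rmult_le_pos.
    + pose proof (Hidnn i j). pose proof (Halpha_nonneg (sigma t) i j). lra.
    + left; apply Rinv_0_lt_compat; lra.
  - intros t i Hi. pose proof (Hd0 t i).
    rewrite (sumR_ext N _ (fun j => / (1 + d t i) * (idmat i j + alpha (sigma t) i j)))
      by (intros; rewrite HPf; unfold Rdiv; ring).
    rewrite sumR_scal, sumR_plus, sumR_idmat by auto.
    change (sumR N (alpha (sigma t) i)) with (d t i). field. lra.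
  - intros t i Hi. rewrite HPf. unfold idmat. rewrite Nat.eqb_refl, Halpha_noself.
    pose proof (Hd0 t i). pose proof (HdB t i Hi).
    apply inv_le_div; try nra.
  - intros t a b Ha Hb Hpos. rewrite HPf.
    pose proof (Hd0 t b). pose proof (HdB t b Hb). pose proof (Hainv t b a Ha Hb Hpos).
    pose proof (Hidnn b a).
    assert (Hinv1 : alpha (sigma t) b a * / alpha (sigma t) b a = 1) by (field; lra).
    assert (HaB : 1 <= alpha (sigma t) b a * B2) by (rewrite <- Hinv1; apply Rmult_le_compat_l; lra).
    apply inv_le_div; try nra.
    assert (1 + B1 <= alpha (sigma t) b a * (1 + B2) * (1 + B1)) by nra.
    assert (0 <= idmat b a * ((1 + B1) * (1 + B2))) by (apply Rmult_le_pos; nra).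
    nra.
Qed.
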